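(* Let $G$ be a finite simple graph on the vertex set $\{1,\dots,n\}$ without cycles of length $3$. Then $E_3^{0,1}(G)=0$, $E_3^{0,2}(G)=0$ and $E_3^{1,1}(G)=0$.
   Context: Let $E$ be a complex elliptic curve, $x,y$ a basis of $H^1(E;\mathbb{Q})$ with $xy$ generating $H^2$. Let $E_2(n)$ be the quotient of the free graded-commutative algebra (for total degree) over $\mathbb{Q}$ on $x_i,y_i$ ($1\le i\le n$) of bidegree $(1,0)$ (pullbacks of $x,y$ along the $i$-th projection $E^n\to E$) and $\omega_{ij}=\omega_{ji}$ ($i\ne j$) of bidegree $(0,1)$ by the relations $(x_i-x_j)\omega_{ij}=0$, $(y_i-y_j)\omega_{ij}=0$, $\omega_{ij}\omega_{jk}+\omega_{jk}\omega_{ki}+\omega_{ki}\omega_{ij}=0$ (distinct $i,j,k$), with the derivation $d_2$ of bidegree $(2,-1)$, $d_2x_i=d_2y_i=0$, $d_2\omega_{ij}=(x_i-x_j)(y_i-y_j)$. For a graph $G$ with edge set $\mathcal{E}$, the graphic elliptic arrangement has complement $M(G)=\{P\in E^n\mid P_i\ne P_j \text{ for all } \{i,j\}\in\mathcal{E}\}$; the second page of the rational Leray spectral sequence of $M(G)\hookrightarrow E^n$ is $E_2(G)$, the sub-differential bigraded algebra of $E_2(n)$ generated by all $x_i,y_i$ and the $\omega_{ij}$ with $\{i,j\}\in\mathcal{E}$. $E_3^{p,q}(G)$ denotes the $d_2$-cohomology of $E_2(G)$ in bidegree $(p,q)$. *)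

(* Defs.v *)
(* Concrete model of the bigraded algebra E_2(n) over Q:
   all generators x_i, y_i, omega_ij have total degree 1, so the free
   graded-commutative algebra on them is the exterior algebra, modelled
   here as Q-valued functions on finite sets of generators (basis element
   for S = ordered wedge of the generators in S, order = enum_rank). *)
From HB Require Import structures.
From mathcomp Require Import all_boot all_order all_algebra.
Set Implicit Arguments.
Unset Strict Implicit.
Unset Printing Implicit Defensive.
Import GRing.Theory.
Local Open Scope ring_scope.

(* Generators: inl (i,false) = x_i, inl (i,true) = y_i,
   inr (i,j) with i < j = omega_ij = omega_ji. *)
Definition Gen (n : nat) : finType :=
  ('I_n * bool + {p : 'I_n * 'I_n | (p.1 < p.2)%N})%type.

Notation Alg n := {ffun {set Gen n} -> rat}.

Section Ext.
Variable n : nat.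
Local Notation G := (Gen n).
Local Notation A := (Alg n).

Definition ascale (c : rat) (a : A) : A := [ffun U => c * a U].

Definition grank (g : G) : nat := enum_rank g.

(* sign of reordering (wedge of S) * (wedge of T) into wedge of S :|: T *)
Definition gsign (S T : {set G}) : rat :=
  (-1) ^+ #|[set p : G * G | [&& p.1 \in S, p.2 \in T & (grank p.2 < grank p.1)%N]]|.

Definition amul (a b : A) : A :=
  [ffun U => \sum_(S : {set G}) \sum_(T : {set G})
     if [&& S :&: T == set0 & S :|: T == U] then gsign S T * a S * b T else 0].

Definition mono (S : {set G}) : A := [ffun U => (U == S)%:R].
Definition gen (g : G) : A := mono [set g].

Definition xg (i : 'I_n) : A := gen (inl (i, false)).
Definition yg (i : 'I_n) : A := gen (inl (i, true)).

Definition isW (i j : 'I_n) (g : G) : bool :=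
  if g is inr p then (val p == (i, j)) || (val p == (j, i)) else false.

(* omega_ij (= omega_ji); only used for i != j *)
Definition omega (i j : 'I_n) : A := \sum_(g | isW i j g) gen g.

Definition isXY (g : G) : bool := if g is inl _ then true else false.

Definition dgen (g : G) : A :=
  match g with
  | inl _ => 0
  | inr p => amul (xg (val p).1 - xg (val p).2) (yg (val p).1 - yg (val p).2)
  end.

(* extension of d_2 as a derivation of total degree 1 (graded Leibniz rule) *)
Definition dmono (S : {set G}) : A :=
  \sum_(g in S)
    ascale ((-1) ^+ #|[set h in S | (grank h < grank g)%N]|)
     (amul (amul (mono [set h in S | (grank h < grank g)%N]) (dgen g))
           (mono [set h in S | (grank g < grank h)%N])).

Definition d2 (a : A) : A := \sum_(S : {set G}) ascale (a S) (dmono S).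

Definition homog (p q : int) (a : A) : Prop :=
  forall U : {set G}, a U != 0 ->
    #|[set g in U | isXY g]|%:Z = p /\ #|[set g in U | ~~ isXY g]|%:Z = q.

Definition is_rel (r : A) : Prop :=
  (exists i j : 'I_n, i != j /\
     (r = amul (xg i - xg j) (omega i j) \/ r = amul (yg i - yg j) (omega i j)))
  \/ (exists i j k : 'I_n, [/\ i != j, j != k & k != i] /\
     r = amul (omega i j) (omega j k) + amul (omega j k) (omega k i)
         + amul (omega k i) (omega i j)).

Definition in_I (a : A) : Prop :=
  exists s : seq (A * A * A), (forall t, t \in s -> is_rel t.1.2) /\
    a = \sum_(t <- s) amul (amul t.1.1 t.1.2) t.2.

Definition allowed (e : rel 'I_n) (g : G) : bool :=
  match g with inl _ => true | inr p => e (val p).1 (val p).2 end.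

(* a represents an element of E_2(G)^{p,q} (its image in E_2(n)) *)
Definition inE2 (e : rel 'I_n) (p q : int) (a : A) : Prop :=
  homog p q a /\ forall U : {set G}, a U != 0 -> U \subset [set g | allowed e g].

(* E_3^{p,q}(G) = 0: every d_2-cocycle in E_2(G)^{p,q} is d_2 of an element
   of E_2(G)^{p-2,q+1}, equalities taken in E_2(n) (i.e. modulo the ideal). *)
Definition E3_vanishes (e : rel 'I_n) (p q : int) : Prop :=
  forall a : A, inE2 e p q a -> in_I (d2 a) ->
    exists b : A, inE2 e (p - 2) (q + 1) b /\ in_I (a - d2 b).

End Ext.

(* Main.v *)
Require Import Defs.
From mathcomp Require Import all_boot all_order all_algebra.
Set Implicit Arguments.
Unset Strict Implicit.
Unset Printing Implicit Defensive.
Import GRing.Theory.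

Section S.
Local Open Scope ring_scope.
Variable n : nat.
Local Notation G := (Gen n).
Local Notation A := (Alg n).

Lemma grankE (g : G) : grank g = index g (enum G).
Proof.
rewrite /grank -{2}(nth_enum_rank g g) index_uniq ?enum_uniq //.
by rewrite -cardE ltn_ord.
Qed.

Lemma rank_lt (u : 'I_n * bool) v : (grank (inl u : G) < grank (inr v : G))%N.
Proof.
rewrite !grankE enumT unlock /= /sum_enum !index_cat.
have hu : (inl u : G) \in [seq inl x | x <- Finite.enum ('I_n * bool)%type].
  by rewrite map_f // -enumT mem_enum.
have hv : (inr v : G) \notin [seq inl x | x <- Finite.enum ('I_n * bool)%type].
  by apply/mapP => -[].
rewrite hu (negbTE hv).
by apply: leq_trans (leq_addr _ _); rewrite index_mem.
Qed.

Lemma rank_eq (g h : G) : (grank g == grank h) = (g == h).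
Proof. by rewrite /grank -(inj_eq enum_rank_inj). Qed.

Lemma disj_union_eq (B T V : {set G}) :
  (B :&: T == set0) && (B :|: T == V) = (B \subset V) && (T == V :\: B).
Proof.
apply/andP/andP => [[/eqP hI /eqP hU]|[hBV /eqP ->]].
  split; first by rewrite -hU subsetUl.
  apply/eqP/setP => x; rewrite -hU !inE.
  move/setP: hI => /(_ x); rewrite !inE.
  by case: (x \in B) => //= ->.
split; apply/eqP/setP => x; rewrite !inE.
  by case: (x \in B).
case xB: (x \in B) => //=.
by rewrite (subsetP hBV x xB).
Qed.

Lemma amul_monoL (B : {set G}) (g : A) V :
  amul (mono B) g V = if B \subset V then gsign B (V :\: B) * g (V :\: B) else 0.
Proof.
rewrite ffunE (bigD1 B) //= [X in _ + X]big1 => [|S SB]; last first.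
  by apply: big1 => T _; rewrite ffunE (negbTE SB); case: ifP => //; rewrite mulr0 mul0r.
rewrite addr0.
case: ifP => hBV.
  rewrite (bigD1 (V :\: B)) //= [X in _ + X]big1 => [|T hT].
    rewrite disj_union_eq hBV eqxx /= ffunE eqxx mulr1 addr0 //.
  by rewrite disj_union_eq hBV (negbTE hT).
by apply: big1 => T _; rewrite disj_union_eq hBV.
Qed.

Lemma amul_monoR (g : A) (C : {set G}) V :
  amul g (mono C) V = if C \subset V then gsign (V :\: C) C * g (V :\: C) else 0.
Proof.
rewrite ffunE.
have -> : \sum_(S : {set G}) \sum_(T : {set G})
    (if [&& S :&: T == set0 & S :|: T == V] then gsign S T * g S * mono C T else 0)
  = \sum_(S : {set G}) (if [&& S :&: C == set0 & S :|: C == V] then gsign S C * g S else 0).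
  apply: eq_bigr => S _.
  rewrite (bigD1 C) //= [X in _ + X]big1 => [|T TC]; last first.
    by rewrite ffunE (negbTE TC); case: ifP => //; rewrite mulr0.
  by rewrite addr0 ffunE eqxx mulr1.
case: ifP => hCV.
  rewrite (bigD1 (V :\: C)) //= [X in _ + X]big1 => [|T hT].
    by rewrite setIC setUC disj_union_eq hCV eqxx /= addr0 mulrC.
  by rewrite setIC setUC disj_union_eq hCV (negbTE hT).
by apply: big1 => T _; rewrite setIC setUC disj_union_eq hCV.
Qed.

Lemma amulDl (a b c : A) : amul (a + b) c = amul a c + amul b c.
Proof.
apply/ffunP => U; rewrite !ffunE -big_split; apply: eq_bigr => S _.
rewrite -big_split; apply: eq_bigr => T _; case: ifP => _; rewrite ?addr0 //.
by rewrite ffunE mulrDr mulrDl.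
Qed.

Lemma amulDr (a b c : A) : amul a (b + c) = amul a b + amul a c.
Proof.
apply/ffunP => U; rewrite !ffunE -big_split; apply: eq_bigr => S _.
rewrite -big_split; apply: eq_bigr => T _; case: ifP => _; rewrite ?addr0 //.
by rewrite ffunE mulrDr.
Qed.

Lemma amulNl (a c : A) : amul (- a) c = - amul a c.
Proof.
apply/ffunP => U; rewrite !ffunE -sumrN; apply: eq_bigr => S _.
rewrite -sumrN; apply: eq_bigr => T _; case: ifP => _; rewrite ?oppr0 //.
by rewrite ffunE mulrN mulNr.
Qed.

Lemma amulNr (a c : A) : amul a (- c) = - amul a c.
Proof.
apply/ffunP => U; rewrite !ffunE -sumrN; apply: eq_bigr => S _.
rewrite -sumrN; apply: eq_bigr => T _; case: ifP => _; rewrite ?oppr0 //.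
by rewrite ffunE mulrN.
Qed.

Lemma amulBl (a b c : A) : amul (a - b) c = amul a c - amul b c.
Proof. by rewrite amulDl amulNl. Qed.
Lemma amulBr (a b c : A) : amul a (b - c) = amul a b - amul a c.
Proof. by rewrite amulDr amulNr. Qed.

Lemma amul0l (c : A) : amul 0 c = 0.
Proof.
apply/ffunP => U; rewrite !ffunE big1 // => S _; rewrite big1 // => T _.
by case: ifP => _ //; rewrite ffunE mulr0 mul0r.
Qed.
Lemma amul0r (c : A) : amul c 0 = 0.
Proof.
apply/ffunP => U; rewrite !ffunE big1 // => S _; rewrite big1 // => T _.
by case: ifP => _ //; rewrite ffunE mulr0.
Qed.

Lemma amulZl k (a c : A) : amul (ascale k a) c = ascale k (amul a c).
Proof.
apply/ffunP => U; rewrite !ffunE mulr_sumr; apply: eq_bigr => S _.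
rewrite mulr_sumr; apply: eq_bigr => T _; case: ifP => _; rewrite ?mulr0 //.
by rewrite ffunE; rewrite mulrCA !mulrA.
Qed.

Lemma amul_suml I (r : seq I) (P : pred I) (F : I -> A) c :
  amul (\sum_(i <- r | P i) F i) c = \sum_(i <- r | P i) amul (F i) c.
Proof. exact: (big_morph (fun a => amul a c) (fun a b => amulDl a b c) (amul0l c)). Qed.
Lemma amul_sumr I (r : seq I) (P : pred I) (F : I -> A) c :
  amul c (\sum_(i <- r | P i) F i) = \sum_(i <- r | P i) amul c (F i).
Proof. exact: (big_morph (fun a => amul c a) (fun a b => amulDr c a b) (amul0r c)). Qed.

Definition pairs (S T : {set G}) :=
  [set p : G * G | [&& p.1 \in S, p.2 \in T & (grank p.2 < grank p.1)%N]].
Lemma gsignE S T : gsign S T = (-1) ^+ #|pairs S T|.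
Proof. by []. Qed.
Lemma gsign_free (S T : {set G}) :
  (forall s t, s \in S -> t \in T -> (grank s < grank t)%N) -> gsign S T = 1.
Proof.
move=> H; rewrite /gsign.
have -> : [set p : G * G | [&& p.1 \in S, p.2 \in T & (grank p.2 < grank p.1)%N]] = set0.
  apply/setP => -[s t]; rewrite /pairs !inE /=; apply/and3P => -[hs ht hr].
  by have := H s t hs ht; rewrite ltnNge (ltnW hr).
by rewrite cards0 expr0.
Qed.

Lemma gsign0l (T : {set G}) : gsign set0 T = 1.
Proof. by apply: gsign_free => s t; rewrite inE. Qed.
Lemma gsign0r (S : {set G}) : gsign S set0 = 1.
Proof. by apply: gsign_free => s t _; rewrite inE. Qed.

Lemma gsign_nz (S T : {set G}) : gsign S T != 0.
Proof. by rewrite /gsign signr_eq0. Qed.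

Lemma gsign_sq (S T : {set G}) : gsign S T * gsign S T = 1.
Proof. by rewrite /gsign -expr2 sqrr_sign. Qed.

Lemma gsign11 (a b : G) : gsign [set a] [set b] = (-1) ^+ (grank b < grank a)%N.
Proof.
rewrite /gsign; case: ltnP => h.
  have -> : [set p : G * G | [&& p.1 \in [set a], p.2 \in [set b] & (grank p.2 < grank p.1)%N]]
     = [set (a, b)].
    apply/setP => -[s t]; rewrite /pairs !inE /= xpair_eqE.
    by case: eqP => [->|] //=; case: eqP => [->|] //=; rewrite h.
  by rewrite cards1.
have -> : [set p : G * G | [&& p.1 \in [set a], p.2 \in [set b] & (grank p.2 < grank p.1)%N]]
     = set0.
  apply/setP => -[s t]; rewrite /pairs !inE /=.
  by case: eqP => [->|] //=; case: eqP => [->|] //=; rewrite ltnNge h.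
by rewrite cards0.
Qed.

Lemma gsign_anti (a b : G) : a != b -> gsign [set a] [set b] = - gsign [set b] [set a].
Proof.
move=> ab; rewrite !gsign11.
have : grank a != grank b by rewrite rank_eq.
by case: ltngtP => //= _ _; rewrite ?expr1 ?expr0 ?opprK.
Qed.


Lemma gsignUr (S T1 T2 : {set G}) : T1 :&: T2 = set0 ->
  gsign S (T1 :|: T2) = gsign S T1 * gsign S T2.
Proof.
move=> hT; rewrite !gsignE -exprD.
have -> : pairs S (T1 :|: T2) = pairs S T1 :|: pairs S T2.
  by apply/setP => -[s t]; rewrite /pairs !inE /=; case: (s \in S); case: (t \in T1); case: (t \in T2); case: (grank t < grank s)%N.
have h0 : pairs S T1 :&: pairs S T2 = set0.
  apply/setP => -[s t]; rewrite /pairs !inE /=.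
  move/setP: hT => /(_ t); rewrite !inE.
  by case: (t \in T1); case: (t \in T2); rewrite ?andbF.
by rewrite cardsU h0 cards0 subn0.
Qed.

Lemma gsignUl (S1 S2 T : {set G}) : S1 :&: S2 = set0 ->
  gsign (S1 :|: S2) T = gsign S1 T * gsign S2 T.
Proof.
move=> hT; rewrite !gsignE -exprD.
have -> : pairs (S1 :|: S2) T = pairs S1 T :|: pairs S2 T.
  by apply/setP => -[s t]; rewrite /pairs !inE /=; case: (s \in S1); case: (s \in S2); case: (t \in T); case: (grank t < grank s)%N.
have h0 : pairs S1 T :&: pairs S2 T = set0.
  apply/setP => -[s t]; rewrite /pairs !inE /=.
  move/setP: hT => /(_ s); rewrite !inE.
  by case: (s \in S1); case: (s \in S2); rewrite ?andbF.
by rewrite cardsU h0 cards0 subn0.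
Qed.


Local Notation P := {p : 'I_n * 'I_n | (p.1 < p.2)%N}.
Definition xv (i : 'I_n) : G := inl (i, false).
Definition yv (i : 'I_n) : G := inl (i, true).
Definition wg (q : P) : G := inr q.
Definition vin (a : 'I_n) (q : P) := (a == (val q).1) || (a == (val q).2).
Definition sv (a : 'I_n) (q : P) : rat := if a == (val q).1 then 1 else -1.

Lemma xv_eq a c : (xv a == xv c) = (a == c).
Proof. by apply/eqP/eqP => [[]|->]. Qed.
Lemma yv_eq a c : (yv a == yv c) = (a == c).
Proof. by apply/eqP/eqP => [[]|->]. Qed.
Lemma xy_eq a c : (xv a == yv c) = false.
Proof. by apply/eqP => -[]. Qed.
Lemma yx_eq a c : (yv a == xv c) = false.
Proof. by apply/eqP => -[]. Qed.
Lemma xw_eq a q : (xv a == wg q) = false.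
Proof. by []. Qed.
Lemma yw_eq a q : (yv a == wg q) = false.
Proof. by []. Qed.
Lemma wx_eq a q : (wg q == xv a) = false.
Proof. by []. Qed.
Lemma wy_eq a q : (wg q == yv a) = false.
Proof. by []. Qed.
Lemma ww_eq q q' : (wg q == wg q') = (q == q').
Proof. by apply/eqP/eqP => [[]|->]. Qed.

Lemma set2_xy a b c d : ([set xv a; yv b] == [set xv c; yv d]) = (a == c) && (b == d).
Proof.
apply/eqP/andP => [E|[/eqP-> /eqP->]//].
have h1 : xv a \in [set xv c; yv d] by rewrite -E !inE eqxx.
have h2 : yv b \in [set xv c; yv d] by rewrite -E !inE eqxx orbT.
by rewrite !inE xv_eq xy_eq orbF in h1; rewrite !inE yv_eq yx_eq /= in h2.
Qed.

Lemma genmul (g h : G) V : amul (gen g) (gen h) V =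
  if (g != h) && (V == [set g; h]) then gsign [set g] [set h] else 0.
Proof.
rewrite /gen amul_monoL sub1set ffunE.
case: (boolP (g \in V)) => gV /=; last first.
  by case: ifP => // /andP[_ /eqP hV]; rewrite hV !inE eqxx in gV.
have hV := setD1K gV.
case: (boolP (g == h)) => [/eqP gh|gh] /=.
  subst h; case: eqP => [E|]; last by rewrite mulr0.
  by have := setD11 g V; rewrite E inE eqxx.
case: (boolP (V :\ g == [set h])) => [/eqP E|E].
  by rewrite -[X in X == _]hV E eqxx mulr1.
rewrite mulr0; case: eqP => // hV'.
have gnh : g \notin [set h] by rewrite inE.
by rewrite hV' (setU1K gnh) eqxx in E.
Qed.

Lemma mono0l (g : A) : amul (mono set0) g = g.
Proof.
by apply/ffunP => V; rewrite amul_monoL sub0set setD0 gsign0l mul1r.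
Qed.
Lemma mono0r (g : A) : amul g (mono set0) = g.
Proof.
by apply/ffunP => V; rewrite amul_monoR sub0set setD0 gsign0r mul1r.
Qed.

Lemma subE (f g : A) V : (f - g) V = f V - g V.
Proof. by rewrite !ffunE. Qed.
Lemma addE (f g : A) V : (f + g) V = f V + g V.
Proof. by rewrite !ffunE. Qed.

Lemma dgenE (q : P) V : dgen (inr q) V =
  amul (gen (xv (val q).1)) (gen (yv (val q).1)) V
  - amul (gen (xv (val q).1)) (gen (yv (val q).2)) V
  - (amul (gen (xv (val q).2)) (gen (yv (val q).1)) V
     - amul (gen (xv (val q).2)) (gen (yv (val q).2)) V).
Proof. by rewrite /dgen amulBl !amulBr !subE. Qed.

Lemma P_neq (q : P) : (val q).1 != (val q).2.
Proof. by case: q => [[k l] /= h]; apply/eqP => E; rewrite E ltnn in h. Qed.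

Lemma dgen_val (q : P) a b : vin a q -> vin b q ->
  dgen (inr q) [set xv a; yv b] = sv a q * sv b q * gsign [set xv a] [set yv b].
Proof.
have kl := P_neq q; have lk : (val q).2 != (val q).1 by rewrite eq_sym.
rewrite /vin /sv dgenE !genmul !xy_eq /= !set2_xy.
by case/orP => /eqP ->; case/orP => /eqP ->;
  rewrite ?eqxx ?(negbTE kl) ?(negbTE lk) /=;
  rewrite ?subr0 ?sub0r ?opprK ?mul1r ?mulN1r ?opprK.
Qed.

Lemma dgen_supp (q : P) V : dgen (inr q) V != 0 ->
  exists a b, [/\ vin a q, vin b q & V = [set xv a; yv b]].
Proof.
rewrite dgenE !genmul !xy_eq /=.
set k := (val q).1; set l := (val q).2.
case: (V =P [set xv k; yv k]) => [->|_]; first by exists k, k; rewrite /vin eqxx.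
case: (V =P [set xv k; yv l]) => [->|_]; first by exists k, l; rewrite /vin !eqxx ?orbT.
case: (V =P [set xv l; yv k]) => [->|_]; first by exists l, k; rewrite /vin !eqxx ?orbT.
case: (V =P [set xv l; yv l]) => [->|_]; first by exists l, l; rewrite /vin !eqxx ?orbT.
by rewrite !subrr eqxx.
Qed.


Definition VanU (U : {set G}) (c : A) := forall T : {set G}, T \subset U -> c T = 0.

Lemma van_amull U (f g : A) : VanU U f -> VanU U (amul f g).
Proof.
move=> hf T hT; rewrite ffunE big1 // => S _; rewrite big1 // => R _.
case: ifP => // /andP[_ /eqP hU].
have hS : S \subset U by apply: subset_trans hT; rewrite -hU subsetUl.
by rewrite (hf S hS) mulr0 mul0r.
Qed.

Lemma van_amulr U (f g : A) : VanU U g -> VanU U (amul f g).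
Proof.
move=> hg T hT; rewrite ffunE big1 // => S _; rewrite big1 // => R _.
case: ifP => // /andP[_ /eqP hU].
have hR : R \subset U by apply: subset_trans hT; rewrite -hU subsetUr.
by rewrite (hg R hR) mulr0.
Qed.

Lemma van_add U (f g : A) : VanU U f -> VanU U g -> VanU U (f + g).
Proof. by move=> hf hg T hT; rewrite addE hf ?hg ?addr0. Qed.

Definition Good (U : {set G}) := forall q : P, wg q \in U ->
  [/\ forall b, inl ((val q).1, b) \notin U, forall b, inl ((val q).2, b) \notin U
    & forall q' : P, wg q' \in U -> q' = q].

Lemma isW_inr i j (g : G) : isW i j g -> exists q : P, [/\ g = wg q, vin i q & vin j q].
Proof.
case: g => // q /= H; exists q; split => //; rewrite /vin;
  by case: q H => [[a b] hab] /=; case/orP => /eqP [-> ->]; rewrite eqxx ?orbT.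
Qed.

Lemma van_rel1 U (b : bool) i j : Good U ->
  VanU U (amul (gen (inl (i, b)) - gen (inl (j, b))) (omega i j)).
Proof.
move=> hG T hT; rewrite /omega amul_sumr sum_ffunE big1 // => g /isW_inr [q [-> hi hj]].
rewrite /gen amul_monoR sub1set; case: ifP => // hq.
have hqU : wg q \in U := subsetP hT _ hq.
have [h1 h2 _] := hG q hqU.
have nin : forall c, vin c q -> (T :\ wg q == [set inl (c, b)]) = false.
  move=> c hc; apply/negbTE/eqP => E.
  have : inl (c, b) \in T by have := set11 (inl (c, b) : G); rewrite -E => /setD1P [].
  move/(subsetP hT); case/orP: hc => /eqP ->; [exact/negP/h1|exact/negP/h2].
by rewrite subE !ffunE (nin i hi) (nin j hj) subrr mulr0.
Qed.

Lemma van_ww U i j k l : Good U -> VanU U (amul (omega i j) (omega k l)).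
Proof.
move=> hG T hT; rewrite /omega amul_suml sum_ffunE big1 // => g /isW_inr [q [-> _ _]].
rewrite amul_sumr sum_ffunE big1 // => h /isW_inr [q' [-> _ _]].
rewrite genmul; case: ifP => // /andP [hne /eqP ET].
have hq : wg q \in U by apply: (subsetP hT); rewrite ET !inE eqxx.
have hq' : wg q' \in U by apply: (subsetP hT); rewrite ET !inE eqxx orbT.
have [_ _ h3] := hG q hq.
by rewrite (h3 q' hq') eqxx in hne.
Qed.

Lemma van_rel U r : Good U -> is_rel r -> VanU U r.
Proof.
move=> hG [[i [j [_ [->|->]]]]|[i [j [k [_ ->]]]]].
- exact: (van_rel1 false).
- exact: (van_rel1 true).
- by apply: van_add; [apply: van_add|]; apply: van_ww.
Qed.

Lemma in_I_van U c : Good U -> in_I c -> c U = 0.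
Proof.
move=> hG [s [hs ->]]; rewrite sum_ffunE; apply: big1_seq => t /andP [_ ht].
apply: van_amull (subxx U); apply: van_amulr; exact: van_rel (hs t ht).
Qed.

Lemma d2E (a : A) U : d2 a U = \sum_(S : {set G}) a S * dmono S U.
Proof. by rewrite /d2 sum_ffunE; apply: eq_bigr => S _; rewrite ffunE. Qed.

Definition Bl (S : {set G}) (t : G) := [set h in S | (grank h < grank t)%N].
Definition Cl (S : {set G}) (t : G) := [set h in S | (grank t < grank h)%N].
Definition dterm S t : A := ascale ((-1) ^+ #|Bl S t|)
  (amul (amul (mono (Bl S t)) (dgen t)) (mono (Cl S t))).

Lemma dmonoE (S U : {set G}) : dmono S U = \sum_(t in S) dterm S t U.
Proof. by rewrite /dmono sum_ffunE. Qed.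

Lemma BC_eq (S : {set G}) (t : G) : S :\ t = Cl S t :|: Bl S t.
Proof.
apply/setP => h; rewrite !inE.
have := rank_eq h t.
by case: ltngtP => _ /=; [move/esym/negbT => ->|move/esym/negbT => ->|move/esym ->];
  rewrite ?andbF ?orbF //= andbT.
Qed.

Lemma BC_disj (S : {set G}) (t : G) : [disjoint Bl S t & Cl S t].
Proof.
rewrite -setI_eq0; apply/eqP/setP => h; rewrite !inE.
by case: ltngtP; rewrite ?andbF.
Qed.

Lemma dterm_val (S : {set G}) (t : G) (U : {set G}) : dterm S t U =
  if (S :\ t) \subset U then
    (-1) ^+ #|Bl S t| * gsign (U :\: Cl S t) (Cl S t)
      * gsign (Bl S t) (U :\: Cl S t :\: Bl S t) * dgen t (U :\: (S :\ t))
  else 0.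
Proof.
rewrite ffunE amul_monoR amul_monoL BC_eq subUset subsetD BC_disj andbT.
case: (Cl S t \subset U) => /=; last by rewrite mulr0.
case: (Bl S t \subset U) => /=; last by rewrite !mulr0.
by rewrite setDDl !mulrA.
Qed.

Lemma dterm_supp (S : {set G}) (t : G) (U : {set G}) : dterm S t U != 0 ->
  (S :\ t) \subset U /\ dgen t (U :\: (S :\ t)) != 0.
Proof.
rewrite dterm_val; case: ifP => // _ h; split => //.
by apply: contraNneq h => ->; rewrite mulr0.
Qed.

Lemma dterm_nz (S : {set G}) (t : G) (U : {set G}) : (S :\ t) \subset U -> dgen t (U :\: (S :\ t)) != 0 ->
  dterm S t U != 0.
Proof.
move=> h1 h2; rewrite dterm_val h1.
by rewrite !mulf_neq0 ?signr_eq0 ?gsign_nz.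
Qed.


Lemma sum_single (F : {set G} -> rat) S0 :
  (forall S, S != S0 -> F S = 0) -> \sum_(S : {set G}) F S = F S0.
Proof. by move=> h; rewrite (bigD1 S0) //= big1 ?addr0. Qed.

Lemma sum_two (F : {set G} -> rat) S1 S2 : S1 != S2 ->
  (forall S, S != S1 -> S != S2 -> F S = 0) -> \sum_(S : {set G}) F S = F S1 + F S2.
Proof.
move=> h12 h; rewrite (bigD1 S1) //= (bigD1 S2) /=; last by rewrite eq_sym.
rewrite [X in _ + (_ + X)]big1 ?addr0 //.
by move=> S /andP [h1 h2]; apply: h.
Qed.

Lemma dmono_some (S V : {set G}) : dmono S V != 0 -> exists t, t \in S /\ dterm S t V != 0.
Proof.
rewrite dmonoE => h.
case: (pickP (fun t => (t \in S) && (dterm S t V != 0))) => [t /andP [h1 h2]|hn].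
  by exists t.
move: h; rewrite big1 ?eqxx // => t tS.
by have := hn t; rewrite tS /= => /negbFE /eqP.
Qed.

Lemma dterm_inl (S V : {set G}) u : dterm S (inl u) V = 0.
Proof. by rewrite dterm_val; case: ifP => // _; rewrite ffunE mulr0. Qed.

Lemma vin_fst (q : P) a b : a != b -> vin a q -> vin b q ->
  (val q).1 = (if (a < b)%N then a else b) /\ (val q).2 = (if (a < b)%N then b else a).
Proof.
case: q => [[k l] /= h]; rewrite /vin /= => ab.
case/orP => /eqP ea; case/orP => /eqP eb; subst a b; rewrite ?eqxx // in ab.
  by rewrite h.
by rewrite ltnNge (ltnW h).
Qed.

Lemma edge_eq (q q' : P) a b : a != b -> vin a q -> vin b q -> vin a q' -> vin b q' -> q = q'.
Proof.
move=> ab ha hb ha' hb'.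
have [h1 h2] := vin_fst ab ha hb; have [h1' h2'] := vin_fst ab ha' hb'.
apply: val_inj; rewrite [val q]surjective_pairing [val q']surjective_pairing.
by rewrite h1 h2 h1' h2'.
Qed.

Lemma vin1 (q : P) : vin (val q).1 q. Proof. by rewrite /vin eqxx. Qed.
Lemma vin2 (q : P) : vin (val q).2 q. Proof. by rewrite /vin eqxx orbT. Qed.

Definition oth (i : 'I_n) (q : P) := if i == (val q).1 then (val q).2 else (val q).1.
Lemma oth_vin i q : vin (oth i q) q.
Proof. by rewrite /oth; case: ifP => _; rewrite ?vin1 ?vin2. Qed.
Lemma oth_neq i q : vin i q -> oth i q != i.
Proof.
move=> h; have hq := P_neq q; rewrite /oth; case: (i =P (val q).1) => [->|ne].
  by rewrite eq_sym.
by move: h; rewrite /vin; case/orP => /eqP E; [case: ne|rewrite E].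
Qed.
Lemma vin_cases i c q : vin i q -> vin c q -> c = i \/ c = oth i q.
Proof.
move=> hi hc; rewrite /oth; case: (i =P (val q).1) => [ei|ne].
  by case/orP: hc => /eqP ->; [left|right].
have ei : i = (val q).2 by case/orP: hi => /eqP.
by case/orP: hc => /eqP ->; [right|left].
Qed.

Lemma allowed_e (e : rel 'I_n) (q : P) a b : symmetric e -> e (val q).1 (val q).2 ->
  a != b -> vin a q -> vin b q -> e a b.
Proof.
move=> hs he ab ha hb; have [h1 h2] := vin_fst ab ha hb.
by move: he; rewrite h1 h2; case: ifP => _ // ; rewrite hs.
Qed.

Lemma omega_q (q : P) : omega (val q).1 (val q).2 = gen (wg q).
Proof.
rewrite /omega (big_pred1 (wg q)) // => g; case: g => //= q'.
rewrite /wg; apply/idP/idP; last first.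
  by move/eqP => [->]; rewrite -surjective_pairing eqxx.
case/orP => /eqP E.
  by apply/eqP; congr inr; apply: val_inj; exact: (etrans E (esym (surjective_pairing _))).
case: q' E => [[a b] /= hab] [ea eb]; case: q => [[k l] /= hkl] in ea eb *.
by subst; have := ltn_trans hab hkl; rewrite ltnn.
Qed.


Definition Xs (U : {set G}) := [set g in U | isXY g].
Definition Ws (U : {set G}) := [set g in U | ~~ isXY g].

Lemma U_split (U : {set G}) : U = Xs U :|: Ws U.
Proof. by apply/setP => g; rewrite !inE; case: (g \in U); case: isXY. Qed.

Lemma Ws_inr U g : g \in Ws U -> exists q, g = wg q.
Proof. by rewrite inE; case: g => [u|q] /=; rewrite ?andbF ?andbT // => _; exists q. Qed.
Lemma Xs_inl U g : g \in Xs U -> exists u, g = inl u.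
Proof. by rewrite inE; case: g => [u|q] /=; rewrite ?andbF ?andbT // => _; exists u. Qed.

Lemma form01 (a : A) U : homog 0 1 a -> a U != 0 -> exists q, U = [set wg q].
Proof.
move=> hH hU; have [hX hW] := hH U hU.
have X0 : Xs U = set0 by apply: cards0_eq; case: hX.
have /cards1P [w hw] : #|Ws U| == 1%N by case: hW => ->.
have [q eq] : exists q, w = wg q by apply: (@Ws_inr U); rewrite hw set11.
by exists q; rewrite (U_split U) X0 set0U hw eq.
Qed.

Lemma form02 (a : A) U : homog 0 2 a -> a U != 0 ->
  exists q1 q2, q1 != q2 /\ U = [set wg q1; wg q2].
Proof.
move=> hH hU; have [hX hW] := hH U hU.
have X0 : Xs U = set0 by apply: cards0_eq; case: hX.
have /cards2P [w1 [w2 [hne hw]]] : #|Ws U| == 2%N by case: hW => ->.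
have [q1 e1] : exists q, w1 = wg q by apply: (@Ws_inr U); rewrite hw !inE eqxx.
have [q2 e2] : exists q, w2 = wg q by apply: (@Ws_inr U); rewrite hw !inE eqxx orbT.
exists q1, q2; split; first by rewrite -ww_eq -e1 -e2.
by rewrite (U_split U) X0 set0U hw e1 e2.
Qed.

Lemma form11 (a : A) U : homog 1 1 a -> a U != 0 ->
  exists u q, U = [set inl u; wg q].
Proof.
move=> hH hU; have [hX hW] := hH U hU.
have /cards1P [z hz] : #|Xs U| == 1%N by case: hX => ->.
have /cards1P [w hw] : #|Ws U| == 1%N by case: hW => ->.
have [u eu] : exists u, z = inl u by apply: (@Xs_inl U); rewrite hz set11.
have [q eq] : exists q, w = wg q by apply: (@Ws_inr U); rewrite hw set11.
by exists u, q; rewrite (U_split U) hz hw eu eq.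
Qed.

Lemma inE2_allowed (e : rel 'I_n) p q (a : A) U (q' : P) : inE2 e p q a -> a U != 0 ->
  wg q' \in U -> e (val q').1 (val q').2.
Proof.
move=> [_ hA] hU hq; have := subsetP (hA U hU) _ hq.
by rewrite inE.
Qed.

Lemma zeroE (U : {set G}) : (0 : A) U = 0.
Proof. by rewrite ffunE. Qed.

Lemma d2_0 : d2 (0 : A) = 0.
Proof.
apply/ffunP => U; rewrite d2E zeroE big1 // => S _.
by rewrite zeroE mul0r.
Qed.

Lemma in_I0 : in_I (0 : A).
Proof. by exists [::]; split => //; rewrite big_nil. Qed.

Lemma inE2_0 (e : rel 'I_n) p q : inE2 e p q (0 : A).
Proof. by split => U; rewrite zeroE eqxx. Qed.


Lemma sv_nz a q : sv a q != 0.
Proof. by rewrite /sv; case: ifP; rewrite ?oppr_eq0 oner_eq0. Qed.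

Lemma dgen_nz (q : P) a b : vin a q -> vin b q -> dgen (inr q) [set xv a; yv b] != 0.
Proof. by move=> ha hb; rewrite dgen_val // !mulf_neq0 ?sv_nz ?gsign_nz. Qed.

Lemma part01 (e : rel 'I_n) : E3_vanishes e 0 1.
Proof.
move=> a hE hI; exists 0; split; first exact: inE2_0.
rewrite d2_0 subr0.
suff -> : a = 0 by exact: in_I0.
apply/ffunP => U; rewrite zeroE; apply/eqP; apply/negP => /negP hU.
have [q hUq] := form01 hE.1 hU.
set k := (val q).1; set l := (val q).2.
set V := [set xv k; yv l].
have hG : Good V by move=> q'; rewrite !inE.
have := in_I_van hG hI; rewrite d2E (@sum_single _ U).
  apply/eqP; rewrite mulf_neq0 // hUq dmonoE big_set1.
  by apply: dterm_nz; rewrite setDv ?sub0set // setD0 dgen_nz ?vin1 ?vin2.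
move=> S hS; case: (a S =P 0) => [->|/eqP haS]; first by rewrite mul0r.
have [q' hSq'] := form01 hE.1 haS.
rewrite hSq' dmonoE big_set1.
case: (dterm [set wg q'] (wg q') V =P 0) => [->|/eqP hd]; first by rewrite mulr0.
have [_] := dterm_supp hd; rewrite setDv setD0 => hd'.
have [a' [b' [ha hb hV]]] := dgen_supp hd'.
move/eqP: hV; rewrite set2_xy => /andP [/eqP ea /eqP eb].
have hqq : q = q'.
  apply: (edge_eq (P_neq q)); [exact: vin1|exact: vin2|by rewrite -/k ea|by rewrite -/l eb].
by move: hS; rewrite hSq' hUq hqq eqxx.
Qed.


Lemma good_xy (W : {set G}) : (forall g, g \in W -> isXY g) -> Good W.
Proof. by move=> hW q hq; have := hW _ hq. Qed.

Lemma good_w1 (h : P) (W : {set G}) :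
  (forall g, g \in W -> exists c b, g = inl (c, b) /\ ~~ vin c h) -> Good (wg h |: W).
Proof.
move=> hW q; rewrite !inE => /orP [/eqP E|hq]; last first.
  by have [c [b [E _]]] := hW _ hq.
have -> : q = h by case: E.
split.
- move=> b; rewrite !inE negb_or; apply/andP; split => //.
  by apply/negP => /hW [c [b' [[ec _] hc]]]; rewrite -ec vin1 in hc.
- move=> b; rewrite !inE negb_or; apply/andP; split => //.
  by apply/negP => /hW [c [b' [[ec _] hc]]]; rewrite -ec vin2 in hc.
- move=> q'; rewrite !inE => /orP [/eqP [->] //|].
  by move/hW => [c [b [E0 _]]].
Qed.

Lemma set2C (x y : G) : [set x; y] = [set y; x].
Proof. exact: setUC. Qed.

Lemma dmono_ww_nz (q1 q2 : P) (V : {set G}) : q1 != q2 -> wg q2 \in V -> wg q1 \notin V ->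
  dgen (wg q1) (V :\ wg q2) != 0 -> dmono [set wg q1; wg q2] V != 0.
Proof.
move=> h12 h2 h1 hd; rewrite dmonoE big_setU1 /=; last by rewrite inE ww_eq.
rewrite big_set1.
have -> : dterm [set wg q1; wg q2] (wg q2) V = 0.
  rewrite dterm_val; case: ifP => // hsub.
  have : wg q1 \in [set wg q1; wg q2] :\ wg q2 by rewrite !inE ww_eq h12 eqxx.
  by move/(subsetP hsub); rewrite (negbTE h1).
rewrite addr0; apply: dterm_nz; rewrite setU1K ?inE ?ww_eq // ?sub1set //.
Qed.

Lemma dmono_ww_supp (q1 q2 : P) (V : {set G}) : q1 != q2 -> dmono [set wg q1; wg q2] V != 0 ->
  exists q q', [/\ [set wg q1; wg q2] = [set wg q; wg q'], q != q', wg q' \in V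
    & dgen (wg q) (V :\ wg q') != 0].
Proof.
move=> h12 /dmono_some [t [ht hd]]; have [hs hd'] := dterm_supp hd.
rewrite !inE in ht; case/orP: ht => /eqP et; subst t.
  exists q1, q2; rewrite setU1K ?inE ?ww_eq // sub1set in hs hd'.
  by split.
have e21 : [set wg q1; wg q2] :\ wg q2 = [set wg q1].
  by rewrite set2C setU1K // inE ww_eq eq_sym.
exists q2, q1; rewrite e21 sub1set in hs hd'.
by split => //; [rewrite set2C | rewrite eq_sym].
Qed.


Lemma oth1 (q : P) : oth (val q).1 q = (val q).2.
Proof. by rewrite /oth eqxx. Qed.
Lemma oth2 (q : P) : oth (val q).2 q = (val q).1.
Proof. by rewrite /oth eq_sym (negbTE (P_neq q)). Qed.

Lemma Vw_xy (h : P) (i j : 'I_n) : (wg h |: [set xv i; yv j]) :\ wg h = [set xv i; yv j].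
Proof. by rewrite setU1K // !inE. Qed.

Lemma Vw_good (h : P) (i j : 'I_n) : ~~ vin i h -> ~~ vin j h -> Good (wg h |: [set xv i; yv j]).
Proof.
move=> hi hj; apply: good_w1 => g; rewrite !inE => /orP [/eqP ->|/eqP ->].
  by exists i, false.
by exists j, true.
Qed.

Lemma Vw_w (h q : P) (i j : 'I_n) : wg q \in wg h |: [set xv i; yv j] -> q = h.
Proof. by rewrite !inE => /orP [/eqP [->]|//]. Qed.

Lemma part02 (e : rel 'I_n) : symmetric e -> irreflexive e ->
  (forall i j k : 'I_n, ~~ [&& e i j, e j k & e k i]) -> E3_vanishes e 0 2.
Proof.
move=> hsym hirr htri a hE hI; exists 0; split; first exact: inE2_0.
rewrite d2_0 subr0.
suff -> : a = 0 by exact: in_I0.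
have step1 : forall g h : P, g != h -> ~~ vin (val g).1 h -> ~~ vin (val g).2 h ->
    a [set wg g; wg h] = 0.
  move=> g h gh h1 h2; apply/eqP; apply/negP => /negP hne.
  set i := (val g).1 in h1; set j := (val g).2 in h2.
  set V := wg h |: [set xv i; yv j].
  have := in_I_van (Vw_good h1 h2) hI; rewrite d2E (@sum_single _ [set wg g; wg h]).
    apply/eqP; rewrite mulf_neq0 //; apply: dmono_ww_nz => //.
    - by rewrite setU11.
    - by rewrite !inE ww_eq (negbTE gh).
    - by rewrite Vw_xy dgen_nz ?vin1 ?vin2.
  move=> S hS; case: (a S =P 0) => [->|/eqP haS]; first by rewrite mul0r.
  have [q1 [q2 [h12 eS]]] := form02 hE.1 haS.
  case: (dmono S V =P 0) => [->|/eqP hd]; first by rewrite mulr0.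
  rewrite eS in hd; have [q [q' [eS' hqq' hq'V hdg]]] := dmono_ww_supp h12 hd.
  have eq' := Vw_w hq'V; subst q'.
  rewrite Vw_xy in hdg; have [a' [b' [ha hb /eqP hV]]] := dgen_supp hdg.
  move: hV; rewrite set2_xy => /andP [/eqP ea /eqP eb].
  have eq : g = q.
    by apply: (edge_eq (P_neq g)); [exact: vin1|exact: vin2|rewrite -/i ea|rewrite -/j eb].
  by move: hS; rewrite eS eS' eq eqxx.
apply/ffunP => U; rewrite zeroE; apply/eqP; apply/negP => /negP hU.
have [g [h [gh eU]]] := form02 hE.1 hU.
have hg : e (val g).1 (val g).2 by apply: (inE2_allowed hE hU); rewrite eU !inE eqxx.
have hh : e (val h).1 (val h).2 by apply: (inE2_allowed hE hU); rewrite eU !inE eqxx orbT.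
have [i [hi hih hm]] : exists i, [/\ vin i g, ~~ vin i h & vin (oth i g) h].
  case: (boolP (vin (val g).1 h)) => h1; case: (boolP (vin (val g).2 h)) => h2.
  - by move: gh; rewrite (edge_eq (P_neq g) (vin1 g) (vin2 g) h1 h2) eqxx.
  - by exists (val g).2; rewrite oth2 vin2.
  - by exists (val g).1; rewrite oth1 vin1.
  - by move: hU; rewrite eU step1 ?eqxx.
set m := oth i g in hm.
have him : m != i := oth_neq hi.
set V := wg h |: [set xv i; yv i].
have := in_I_van (Vw_good hih hih) hI; rewrite d2E (@sum_single _ U).
  apply/eqP; rewrite mulf_neq0 // eU; apply: dmono_ww_nz => //.
  - by rewrite setU11.
  - by rewrite !inE ww_eq (negbTE gh).
  - by rewrite Vw_xy dgen_nz.
move=> S hS; case: (a S =P 0) => [->|/eqP haS]; first by rewrite mul0r.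
have [q1 [q2 [h12 eS]]] := form02 hE.1 haS.
case: (dmono S V =P 0) => [->|/eqP hd]; first by rewrite mulr0.
rewrite eS in hd; have [q [q' [eS' hqq' hq'V hdg]]] := dmono_ww_supp h12 hd.
have eq' := Vw_w hq'V; subst q'.
rewrite Vw_xy in hdg; have [a' [b' [ha hb /eqP hV]]] := dgen_supp hdg.
move: hV; rewrite set2_xy => /andP [/eqP ea _]; subst a'.
have hq : e (val q).1 (val q).2 by apply: (inE2_allowed hE haS); rewrite eS eS' !inE eqxx.
case: (q =P g) => [eqg|nqg].
  by move: hS; rewrite eS eS' eqg eU eqxx.
set m' := oth i q.
have hm'i : m' != i := oth_neq ha.
have mm' : m != m'.
  apply/negP => /eqP emm; apply: nqg; apply: (edge_eq him).
  - by rewrite emm; exact: oth_vin.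
  - exact: ha.
  - exact: oth_vin.
  - exact: hi.
case: (boolP (vin m' h)) => hm'h.
  have him' : i != m by rewrite eq_sym.
  have := htri i m m'.
  rewrite (allowed_e hsym hg him' hi (oth_vin i g)).
  rewrite (allowed_e hsym hh mm' hm hm'h).
  by rewrite (allowed_e hsym hq hm'i (oth_vin i q) ha).
have qh : q != h by apply: contraNneq hih => <-.
have := step1 q h qh.
have nq : forall c, vin c q -> ~~ vin c h.
  by move=> c hc; case: (vin_cases ha hc) => ->.
move=> /(_ (nq _ (vin1 q)) (nq _ (vin2 q))) => hz.
by move: haS; rewrite eS eS' hz eqxx.
Qed.


Lemma inl_eq (x y : 'I_n * bool) : (inl x == inl y :> G) = (x == y).
Proof. by apply/eqP/eqP => [[]|->]. Qed.

Lemma set2_zw z (q : P) z' (q' : P) :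
  ([set inl z; wg q] == [set inl z'; wg q']) = (z == z') && (q == q').
Proof.
apply/eqP/andP => [E|[/eqP-> /eqP->]//].
have h1 : (inl z : G) \in [set inl z'; wg q'] by rewrite -E !inE eqxx.
have h2 : wg q \in [set inl z'; wg q'] by rewrite -E !inE eqxx orbT.
by rewrite !inE inl_eq orbF in h1; rewrite !inE ww_eq /= in h2.
Qed.

Lemma Bl_zw u (q : P) : Bl [set inl u; wg q] (wg q) = [set inl u].
Proof.
apply/setP => g; rewrite !inE; case: (g =P inl u) => [->|_] /=; first by rewrite rank_lt.
by case: (g =P wg q) => [->|] //=; rewrite ltnn.
Qed.
Lemma Cl_zw u (q : P) : Cl [set inl u; wg q] (wg q) = set0.
Proof.
apply/setP => g; rewrite !inE; case: (g =P inl u) => [->|_] /=.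
  by rewrite ltnNge ltnW // rank_lt.
by case: (g =P wg q) => [->|] //=; rewrite ltnn.
Qed.

Lemma dmono_zw u (q : P) (V : {set G}) : dmono [set inl u; wg q] V =
  if inl u \in V then - (gsign [set inl u] (V :\ inl u) * dgen (wg q) (V :\ inl u)) else 0.
Proof.
rewrite dmonoE big_setU1 /=; last by rewrite inE.
rewrite big_set1 dterm_inl add0r dterm_val Bl_zw Cl_zw.
have -> : [set inl u; wg q] :\ wg q = [set inl u].
  by rewrite set2C setU1K // inE.
rewrite sub1set; case: ifP => // _.
by rewrite cards1 expr1 !setD0 gsign0r mulr1 mulN1r mulNr.
Qed.

Lemma I11 (x y : G) : x != y -> [set x] :&: [set y] = set0.
Proof.
move=> xy; apply/setP => g; rewrite !inE.
by case: (g =P x) => [->|] //=; rewrite (negbTE xy).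
Qed.

Lemma gsign1_2 (x y z : G) : y != z ->
  gsign [set x] [set y; z] = gsign [set x] [set y] * gsign [set x] [set z].
Proof. by move=> yz; rewrite gsignUr // I11. Qed.

Lemma rxE (q : P) (b : bool) U :
  amul (gen (inl ((val q).1, b)) - gen (inl ((val q).2, b))) (omega (val q).1 (val q).2) U =
  (U == [set inl ((val q).1, b); wg q])%:R - (U == [set inl ((val q).2, b); wg q])%:R.
Proof.
rewrite omega_q amulBl subE !genmul /=.
rewrite !(@gsign_free [set _] [set _]); last first.
- by move=> s t; rewrite !inE => /eqP -> /eqP ->; exact: rank_lt.
- by move=> s t; rewrite !inE => /eqP -> /eqP ->; exact: rank_lt.
by case: eqP; case: eqP.
Qed.

Lemma nin2 (x y z : G) : x != y -> x != z -> x \notin [set y; z].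
Proof. by move=> h1 h2; rewrite !inE negb_or h1 h2. Qed.

Lemma setD1_mid (x y z : G) : y != x -> y != z -> (x |: [set y; z]) :\ y = [set x; z].
Proof.
move=> h1 h2; apply/setP => g; rewrite !inE.
case: (g =P y) => [->|_] /=; last by [].
by rewrite (negbTE h1) (negbTE h2).
Qed.

Lemma alg1 (x1 x2 A B C : rat) : A * B * C != 0 ->
  x1 * - (A * B * (-1 * 1 * C)) + x2 * - (- A * C * (1 * 1 * B)) = 0 -> x1 + x2 = 0.
Proof.
move=> h; rewrite ?(mul1r, mulN1r, mulrN, mulNr, opprK, mulr1, mulrN1).
rewrite [A * C * B]mulrAC -mulrDl.
by move/eqP; rewrite mulf_eq0 (negbTE h) orbF => /eqP.
Qed.

Lemma alg2 (x1 x2 a b c : rat) : a * b * c != 0 ->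
  x1 * - (c * b * (1 * -1 * a)) + x2 * - (- a * - b * (1 * 1 * - c)) = 0 -> x1 + x2 = 0.
Proof.
move=> h; rewrite ?(mul1r, mulN1r, mulrN, mulNr, opprK, mulr1, mulrN1).
rewrite [c * b]mulrC [b * c * a]mulrAC [b * a]mulrC -mulrDl.
by move/eqP; rewrite mulf_eq0 (negbTE h) orbF => /eqP.
Qed.

Lemma ascaleE c (r : A) U : ascale c r U = c * r U.
Proof. by rewrite ffunE. Qed.

Lemma in_I_add (x y : A) : in_I x -> in_I y -> in_I (x + y).
Proof.
move=> [s1 [h1 ->]] [s2 [h2 ->]]; exists (s1 ++ s2); split; last by rewrite big_cat.
by move=> t; rewrite mem_cat => /orP [/h1|/h2].
Qed.

Lemma in_I_sum (I : Type) (r : seq I) (F : I -> A) :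
  (forall i, in_I (F i)) -> in_I (\sum_(i <- r) F i).
Proof.
move=> h; elim: r => [|i r IH]; first by rewrite big_nil; exact: in_I0.
by rewrite big_cons; apply: in_I_add.
Qed.

Lemma in_I_rel (c : rat) (r : A) : is_rel r -> in_I (ascale c r).
Proof.
move=> hr; exists [:: (ascale c (mono set0), r, mono set0)]; split.
  by move=> t; rewrite inE => /eqP ->.
by rewrite big_seq1 /= mono0r amulZl mono0l.
Qed.

Lemma sumP_single (F : P -> rat) q0 :
  (forall q, q != q0 -> F q = 0) -> \sum_(q : P) F q = F q0.
Proof. by move=> h; rewrite (bigD1 q0) //= big1 ?addr0. Qed.


Lemma part11 (e : rel 'I_n) : symmetric e -> irreflexive e ->
  (forall i j k : 'I_n, ~~ [&& e i j, e j k & e k i]) -> E3_vanishes e 1 1.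
Proof.
move=> hsym hirr htri a hE hI; exists 0; split; first exact: inE2_0.
rewrite d2_0 subr0.
have hall : forall z (q : P), a [set inl z; wg q] != 0 -> e (val q).1 (val q).2.
  by move=> z q h; apply: (inE2_allowed hE h); rewrite !inE eqxx orbT.
have dsupp : forall (S V : {set G}), a S != 0 -> dmono S V != 0 ->
    exists z (q : P), [/\ S = [set inl z; wg q], inl z \in V
      & dgen (wg q) (V :\ inl z) != 0].
  move=> S V haS hd; have [u [q eS]] := form11 hE.1 haS.
  exists u, q; rewrite eS dmono_zw in hd; case: ifP hd => // hu.
  by rewrite oppr_eq0 mulf_eq0 negb_or => /andP [_ h].
have step1 : forall (q : P) v b, ~~ vin v q -> a [set inl (v, b); wg q] = 0.
  move=> q v b hv; apply/eqP; apply/negP => /negP hne.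
  have hq := hall _ _ hne.
  have [u [hu hvu]] : exists u, vin u q /\ ~~ e v u.
    case: (boolP (e v (val q).1)) => h1; last by exists (val q).1; rewrite vin1.
    case: (boolP (e v (val q).2)) => h2; last by exists (val q).2; rewrite vin2.
    by have := htri v (val q).1 (val q).2; rewrite h1 hq hsym h2.
  set w := oth u q.
  have hw : vin w q := oth_vin u q.
  have wu : w != u := oth_neq hu.
  have vu : v != u by apply: contraNneq hv => ->.
  have vw : v != w by apply: contraNneq hv => ->.
  pose V : {set G} := inl (v, b) |: [set inl (w, b); inl (u, ~~ b)].
  have hG : Good V by apply: good_xy => g; rewrite !inE => /or3P [] /eqP ->.
  have := in_I_van hG hI; rewrite d2E (@sum_single _ [set inl (v, b); wg q]).
    apply/eqP; rewrite mulf_neq0 // dmono_zw setU11 oppr_eq0 mulf_neq0 ?gsign_nz //.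
    rewrite setU1K; last by rewrite !inE !inl_eq !xpair_eqE (negbTE vw) (negbTE vu).
    by case: (b) => /=; [rewrite set2C; exact: (dgen_nz hu hw)|exact: (dgen_nz hw hu)].
  move=> S hS; case: (a S =P 0) => [->|/eqP haS]; first by rewrite mul0r.
  case: (dmono S V =P 0) => [->|/eqP hd]; first by rewrite mulr0.
  exfalso.
  have [[zc zb] [q' [eS hzV hdg]]] := dsupp S V haS hd.
  have hq' : e (val q').1 (val q').2 by apply: (hall (zc, zb)); rewrite -eS.
  have [a' [b' [ha hb hV']]] := dgen_supp hdg.
  have hx : xv a' \in V :\ inl (zc, zb) by rewrite hV' !inE eqxx.
  have hy : yv b' \in V :\ inl (zc, zb) by rewrite hV' !inE eqxx orbT.
  rewrite /V /xv /yv !inE !inl_eq !xpair_eqE in hzV hx hy.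
  case: b hne hS {V hG hd hdg hV'} hzV hx hy => hne hS hzV hx hy /=.
  - rewrite /= ?andbF ?andbT ?orbF ?orFb in hzV hx hy.
    case/andP: hx => hxz /eqP ea; subst a'.
    case/andP: hy => hyz /orP [/eqP eb|/eqP eb]; subst b'.
      have uv : u != v by rewrite eq_sym.
      by have := allowed_e hsym hq' uv ha hb; rewrite hsym (negbTE hvu).
    have eqq : q = q' := edge_eq wu hw hu hb ha.
    subst q'.
    case/or3P: hzV => /andP [/eqP ez /eqP ezb]; subst zc zb.
    + by rewrite eS eqxx in hS.
    + by rewrite !eqxx in hyz.
    + by rewrite !eqxx in hxz.
  - rewrite /= ?andbF ?andbT ?orbF ?orFb in hzV hx hy.
    case/andP: hy => hyz /eqP eb; subst b'.
    case/andP: hx => hxz /orP [/eqP ea|/eqP ea]; subst a'.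
      by have := allowed_e hsym hq' vu ha hb; rewrite (negbTE hvu).
    have eqq : q = q' := edge_eq wu hw hu ha hb.
    subst q'.
    case/or3P: hzV => /andP [/eqP ez /eqP ezb]; subst zc zb.
    + by rewrite eS eqxx in hS.
    + by rewrite !eqxx in hxz.
    + by rewrite !eqxx in hyz.
have step2 : forall (q : P) b,
    a [set inl ((val q).1, b); wg q] + a [set inl ((val q).2, b); wg q] = 0.
  move=> q b.
  set k := (val q).1; set l := (val q).2.
  have kl : k != l := P_neq q.
  have lk : l != k by rewrite eq_sym.
  case: (boolP (e k l)) => hq; last first.
    have z1 : forall z, a [set inl z; wg q] = 0.
      by move=> z; apply/eqP; apply: contraNT hq => /hall.
    by rewrite !z1 addr0.
  pose V : {set G} := inl (k, b) |: [set inl (l, b); inl (k, ~~ b)].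
  have hG : Good V by apply: good_xy => g; rewrite !inE => /or3P [] /eqP ->.
  pose S1 : {set G} := [set inl (k, b); wg q].
  pose S2 : {set G} := [set inl (l, b); wg q].
  have S12 : S1 != S2 by rewrite set2_zw xpair_eqE (negbTE kl).
  have := in_I_van hG hI; rewrite d2E (@sum_two _ S1 S2) //; last first.
    move=> S hS1 hS2; case: (a S =P 0) => [->|/eqP haS]; first by rewrite mul0r.
    case: (dmono S V =P 0) => [->|/eqP hd]; first by rewrite mulr0.
    exfalso.
    have [[zc zb] [q' [eS hzV hdg]]] := dsupp S V haS hd.
    have hq' : e (val q').1 (val q').2 by apply: (hall (zc, zb)); rewrite -eS.
    have [a' [b' [ha hb hV']]] := dgen_supp hdg.
    have hx : xv a' \in V :\ inl (zc, zb) by rewrite hV' !inE eqxx.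
    have hy : yv b' \in V :\ inl (zc, zb) by rewrite hV' !inE eqxx orbT.
    rewrite /V /xv /yv !inE !inl_eq !xpair_eqE in hzV hx hy.
    have other : S = [set inl (l, b); wg q'] -> vin k q' -> False.
      move=> eS0 hk.
      case: (boolP (vin l q')) => hl.
        have eqq : q = q' := edge_eq kl (vin1 q) (vin2 q) hk hl.
        by move: hS2; rewrite eS0 -eqq eqxx.
      by move: haS; rewrite eS0 step1 ?eqxx.
    have toS1 : S = [set inl (k, b); wg q'] -> vin k q' -> vin l q' -> False.
      move=> eS0 hk hl.
      have eqq : q = q' := edge_eq kl (vin1 q) (vin2 q) hk hl.
      by move: hS1; rewrite eS0 -eqq eqxx.
    case: (b) hzV hx hy other toS1 {hV' hdg V hG hd S1 S2 S12 hS1 hS2} => hzV hx hy other toS1;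
      rewrite /= ?andbF ?andbT ?orbF ?orFb in hzV hx hy.
    - case/andP: hx => hxz /eqP ea; subst a'.
      case/andP: hy => hyz /orP [/eqP eb|/eqP eb]; subst b';
        case/or3P: hzV => /andP [/eqP ez /eqP ezb]; subst zc zb;
        rewrite ?eqxx /= in hxz hyz => //.
      + exact: other eS ha.
      + exact: toS1 eS ha hb.
    - case/andP: hy => hyz /eqP eb; subst b'.
      case/andP: hx => hxz /orP [/eqP ea|/eqP ea]; subst a';
        case/or3P: hzV => /andP [/eqP ez /eqP ezb]; subst zc zb;
        rewrite ?eqxx /= in hxz hyz => //.
      + exact: other eS ha.
      + exact: toS1 eS hb ha.
  have ne1 : (inl (k, b) : G) != inl (l, b) by rewrite inl_eq xpair_eqE (negbTE kl).
  have ne2 : (inl (k, b) : G) != inl (k, ~~ b) by rewrite inl_eq xpair_eqE eqxx; case: (b).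
  have ne3 : (inl (l, b) : G) != inl (k, ~~ b) by rewrite inl_eq xpair_eqE (negbTE lk).
  have e1 : V :\ inl (k, b) = [set inl (l, b); inl (k, ~~ b)].
    by rewrite /V setU1K // nin2.
  have e2 : V :\ inl (l, b) = [set inl (k, b); inl (k, ~~ b)].
    by rewrite /V setD1_mid // eq_sym.
  have hk1 : inl (k, b) \in V by rewrite setU11.
  have hl1 : inl (l, b) \in V by rewrite !inE eqxx orbT.
  rewrite /S1 /S2 !dmono_zw hk1 hl1 e1 e2 /wg.
  have svk : sv k q = 1 by rewrite /sv eqxx.
  have svl : sv l q = -1 by rewrite /sv (negbTE lk).
  case: (b).
  - have d1 := dgen_val (vin1 q) (vin2 q).
    have d2 := dgen_val (vin1 q) (vin1 q).
    rewrite /xv /yv -/k -/l in d1.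
    rewrite /xv /yv -/k in d2.
    rewrite [[set inl (l, true); inl (k, false)]]set2C [[set inl (k, true); inl (k, false)]]set2C.
    rewrite d1 d2 svk svl !gsign1_2 ?inl_eq ?xpair_eqE ?eqxx ?(negbTE lk) ?(negbTE kl) //.
    have n1 : (inl (l, true) : G) != inl (k, true) by rewrite inl_eq xpair_eqE (negbTE lk).
    have n2 : (inl (l, true) : G) != inl (k, false) by rewrite inl_eq xpair_eqE (negbTE lk).
    have n3 : (inl (k, false) : G) != inl (k, true) by rewrite inl_eq xpair_eqE eqxx.
    rewrite (gsign_anti n1) (gsign_anti n2) (gsign_anti n3).
    by apply: alg2; rewrite !mulf_neq0 ?gsign_nz.
  - simpl negb.
    have d1 := dgen_val (vin2 q) (vin1 q).
    have d2 := dgen_val (vin1 q) (vin1 q).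
    rewrite /xv /yv -/k -/l in d1.
    rewrite /xv /yv -/k in d2.
    rewrite d1 d2 svk svl !gsign1_2 ?inl_eq ?xpair_eqE ?eqxx ?(negbTE lk) ?(negbTE kl) //.
    have n1 : (inl (l, false) : G) != inl (k, false) by rewrite inl_eq xpair_eqE (negbTE lk).
    rewrite (gsign_anti n1).
    by apply: alg1; rewrite !mulf_neq0 ?gsign_nz.
pose Ax (q : P) (b : bool) := a [set inl ((val q).1, b); wg q].
pose rl (q : P) (b : bool) : A :=
  amul (gen (inl ((val q).1, b)) - gen (inl ((val q).2, b))) (omega (val q).1 (val q).2).
have -> : a = \sum_(q : P) (ascale (Ax q false) (rl q false) + ascale (Ax q true) (rl q true)).
  apply/ffunP => U; rewrite sum_ffunE.
  rewrite (eq_bigr (fun q => Ax q false * ((U == [set inl ((val q).1, false); wg q])%:R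
              - (U == [set inl ((val q).2, false); wg q])%:R) +
           Ax q true * ((U == [set inl ((val q).1, true); wg q])%:R
              - (U == [set inl ((val q).2, true); wg q])%:R))); last first.
    by move=> q _; rewrite addE !ascaleE /rl !rxE.
  rewrite big_split /=.
case: (boolP [exists z, exists q : P, U == [set inl z; wg q]]) => hU; last first.
  have aU : a U = 0.
    apply/eqP; apply: contraNT hU => hU; have [u [q eU]] := form11 hE.1 hU.
    by apply/existsP; exists u; apply/existsP; exists q; rewrite eU.
  have nU : forall z (q : P), (U == [set inl z; wg q]) = false.
    move=> z q; apply/negP => h; move/negP: hU; apply.
    by apply/existsP; exists z; apply/existsP; exists q.
  by rewrite aU !big1 ?addr0 // => q _; rewrite !nU subrr mulr0.
case/existsP: hU => [[v b] /existsP [q0 /eqP ->]].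
have oth0 : forall b' (q : P), q != q0 ->
    Ax q b' * (([set inl (v, b); wg q0] == [set inl ((val q).1, b'); wg q])%:R
      - ([set inl (v, b); wg q0] == [set inl ((val q).2, b'); wg q])%:R) = 0.
  by move=> b' q hq; rewrite !set2_zw (eq_sym q0) (negbTE hq) !andbF subrr mulr0.
rewrite (@sumP_single _ q0); last exact: oth0.
rewrite (@sumP_single _ q0); last exact: oth0.
rewrite !set2_zw eqxx !andbT !xpair_eqE /Ax.
have kl := P_neq q0.
have s2 := step2 q0 b.
case: (boolP (v == (val q0).1)) => [/eqP ev|nk].
  subst v; rewrite eq_sym (negbTE kl) /=.
  by case: (b) s2 => /= _; rewrite ?subr0 ?mulr1 ?mulr0 ?addr0 ?add0r.
case: (boolP (v == (val q0).2)) => [/eqP ev|nl].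
  subst v; rewrite /=.
  have -> : a [set inl ((val q0).2, b); wg q0] = - a [set inl ((val q0).1, b); wg q0].
    by apply/eqP; rewrite -addr_eq0 addrC s2.
  by case: (b) => /=; rewrite ?sub0r ?mulrN1 ?mulr0 ?addr0 ?add0r.
have hv : ~~ vin v q0 by rewrite /vin negb_or nk nl.
rewrite /= step1 //.
by case: (b); rewrite /= ?subrr ?mulr0 ?addr0.
apply: in_I_sum => q; apply: in_I_add; apply: in_I_rel; left;
  exists (val q).1, (val q).2; (split; first exact: P_neq).
  by left.
by right.
Qed.

End S.


Unset Implicit Arguments.

Theorem lemma4p4 (n : nat) (e : rel 'I_n) :
  symmetric e -> irreflexive e ->
  (forall i j k : 'I_n, ~~ [&& e i j, e j k & e k i]) ->
  [/\ E3_vanishes e 0 1, E3_vanishes e 0 2 & E3_vanishes e 1 1].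
Proof.
move=> hs hi ht; split.
- exact: part01.
- exact: part02.
- exact: part11.
Qed.
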